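(* For every integer $k\geq 1$, the symmetric directed paths satisfy $\chi'_{D_{1,2}}(\overleftrightarrow{P_{2k}}) = 2$ and $\chi'_{D_{1,2}}(\overleftrightarrow{P_{2k+1}}) = 3$. For every integer $n \geq 3$, the symmetric directed cycle satisfies $\chi'_{D_{1,2}}(\overleftrightarrow{C_n}) = 3$.
   Context: $P_n$ denotes the path on $n$ vertices and $C_n$ the cycle on $n$ vertices. For a simple graph $G$, the symmetric digraph $\overleftrightarrow{G}$ is obtained by replacing each edge $uv$ of $G$ by the pair of opposite arcs $\overrightarrow{uv}$ and $\overrightarrow{vu}$. An arc-colouring is proper of type I if any two consecutive arcs $\overrightarrow{uv},\overrightarrow{vw}$ (including $w=u$) receive distinct colours. An arc-colouring is distinguishing if the only automorphism of $\overleftrightarrow{G}$ preserving the colour of every arc is the identity. $\chi'_{D_{1,2}}(\overleftrightarrow{G})$ is the least number of colours in a distinguishing proper arc-colouring of type I of $\overleftrightarrow{G}$. *)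

(* Defs.v *)
From mathcomp Require Import all_boot all_fingroup.
Set Implicit Arguments. Unset Strict Implicit. Unset Printing Implicit Defensive.

(* Simple graphs on vertex set 'I_n are given by an adjacency relation
   (symmetric, irreflexive).  The symmetric digraph <->G has arc set
   { (u,v) | e u v }. *)

Definition path_rel (n : nat) : rel 'I_n :=
  fun i j => (i.+1 == j :> nat) || (j.+1 == i :> nat).

Definition cycle_rel (n : nat) : rel 'I_n :=
  fun i j => (j == i.+1 %% n :> nat) || (i == j.+1 %% n :> nat).

(* Arc colourings with k colours: a colour in 'I_k for every ordered pair;
   only the values on arcs (u,v) with e u v are relevant. *)
Definition arc_colouring (n k : nat) := {ffun 'I_n * 'I_n -> 'I_k}.

(* Proper of type I: consecutive arcs uv, vw (w = u allowed) get distinct colours. *)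
Definition proper_typeI n k (e : rel 'I_n) (c : arc_colouring n k) : Prop :=
  forall u v w, e u v -> e v w -> c (u, v) != c (v, w).

Definition digraph_aut n (e : rel 'I_n) (s : {perm 'I_n}) : Prop :=
  forall u v, e (s u) (s v) = e u v.

Definition distinguishing n k (e : rel 'I_n) (c : arc_colouring n k) : Prop :=
  forall s : {perm 'I_n}, digraph_aut e s ->
    (forall u v, e u v -> c (s u, s v) = c (u, v)) -> s = 1%g.

Definition has_DPC n (e : rel 'I_n) (k : nat) : Prop :=
  exists c : arc_colouring n k, proper_typeI e c /\ distinguishing e c.

Definition chiD12_is n (e : rel 'I_n) (k : nat) : Prop :=
  has_DPC e k /\ forall m, has_DPC e m -> k <= m.

(* Main.v *)
Require Import Defs.
From mathcomp Require Import all_boot all_fingroup.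
From mathcomp Require Import zify.
Set Implicit Arguments. Unset Strict Implicit.

Lemma col2 (x y z : 'I_2) : x != y -> y != z -> x = z.
Proof.
move=> H1 H2; apply/val_inj; move: H1 H2; rewrite -!val_eqE /=.
have := ltn_ord x; have := ltn_ord y; have := ltn_ord z; lia.
Qed.

Lemma step2 (p q r X Y : 'I_2) : X != Y -> p = X -> p != q -> q != r -> q = Y /\ r = X.
Proof.
move=> hXY -> hq hr.
have hqY : q = Y by apply: (@col2 _ X) => //; rewrite eq_sym.
split => //; apply: (@col2 _ Y); first by rewrite eq_sym -hqY.
by rewrite eq_sym.
Qed.

Lemma lb2 n (e : rel 'I_n) k u v : e u v -> e v u -> has_DPC e k -> 2 <= k.
Proof.
move=> Huv Hvu [c [Hp _]]; have := Hp u v u Huv Hvu; rewrite -val_eqE /=.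
have := ltn_ord (c (u, v)); have := ltn_ord (c (v, u)); lia.
Qed.

Lemma outeq n (e : rel 'I_n) (c : arc_colouring n 2) v a b :
  proper_typeI e c -> e v a -> e a v -> e v b -> c (v, a) = c (v, b).
Proof.
move=> Hp Hva Hav Hvb; apply: (@col2 _ (c (a, v))).
  exact: Hp. exact: Hp.
Qed.

Lemma rigid N (e : rel 'I_N.+1) (s : {perm 'I_N.+1}) :
  digraph_aut e s ->
  (forall m, m.+2 < N.+1 -> forall j : 'I_N.+1, e (inord m.+1) j -> j = inord m \/ j = inord m.+2) ->
  (forall m, m.+1 < N.+1 -> e (inord m) (inord m.+1)) ->
  s (inord 0) = inord 0 -> s (inord 1) = inord 1 -> s = 1%g.
Proof.
move=> Ha Hnb Hadj H0 H1.
have key : forall m, (m < N.+1 -> s (inord m) = inord m) /\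
                     (m.+1 < N.+1 -> s (inord m.+1) = inord m.+1).
  elim=> [|m [IH1 IH2]]; first by split.
  split; first exact: IH2.
  move=> Hm.
  have Hm1 : s (inord m.+1) = inord m.+1 by apply: IH2; lia.
  have He : e (inord m.+1) (s (inord m.+2)).
    by rewrite -Hm1 Ha; apply: Hadj.
  case: (Hnb m Hm _ He) => // Hc.
  have Hm0 : s (inord m) = inord m by apply: IH1; lia.
  rewrite -Hm0 in Hc; move/perm_inj: Hc => Hc.
  have := congr1 val Hc; rewrite /= !inordK; lia.
apply/permP => i; rewrite perm1.
have [Hi _] := key i; rewrite -[i]inord_val; exact: Hi.
Qed.

Lemma path_adj N m : m.+1 < N.+1 -> @path_rel N.+1 (inord m) (inord m.+1).
Proof. move=> H; rewrite /path_rel !inordK; lia. Qed.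

Lemma path_nb N m : m.+2 < N.+1 -> forall j : 'I_N.+1,
  path_rel (inord m.+1) j -> j = inord m \/ j = inord m.+2.
Proof.
move=> Hm j; rewrite /path_rel inordK; last lia.
move=> H; have := ltn_ord j.
have : nat_of_ord j = m \/ nat_of_ord j = m.+2 by lia.
by case=> Hj _; [left|right]; apply/val_inj; rewrite /= inordK; lia.
Qed.

Lemma path_rigid0 N (s : {perm 'I_N.+1}) : 0 < N ->
  digraph_aut (@path_rel N.+1) s -> s (inord 0) = inord 0 -> s = 1%g.
Proof.
move=> HN Ha H0; apply: (rigid Ha) => //.
- exact: path_nb.
- exact: path_adj.
have : path_rel (s (inord 0)) (s (inord 1)) by rewrite Ha; apply: path_adj; lia.
rewrite H0 /path_rel inordK // => H; apply/val_inj; rewrite /= inordK; lia.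
Qed.

Lemma path_ends N (s : {perm 'I_N.+1}) : digraph_aut (@path_rel N.+1) s ->
  nat_of_ord (s (inord 0)) = 0 \/ nat_of_ord (s (inord 0)) = N.
Proof.
move=> Ha; set m := nat_of_ord (s (inord 0)).
have Hm : m < N.+1 by exact: ltn_ord.
have [H|H] : m = 0 \/ m = N \/ (0 < m < N) by lia. by left.
case: H => H; first by right.
have Hs : s (inord 0) = inord m by rewrite /m inord_val.
have nb1 : forall x : 'I_N.+1, path_rel x (inord m) -> nat_of_ord ((s^-1)%g x) = 1.
  move=> x Hx.
  have : path_rel (s ((s^-1)%g x)) (s (inord 0)) by rewrite permKV Hs.
  rewrite Ha /path_rel inordK; last lia. lia.
have h1 := nb1 (inord m.-1); have h2 := nb1 (inord m.+1).
have e1 : @path_rel N.+1 (inord m.-1) (inord m) by rewrite /path_rel !inordK; lia.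
have e2 : @path_rel N.+1 (inord m.+1) (inord m) by rewrite /path_rel !inordK; lia.
have := h1 e1; have := h2 e2 => a b.
have : (s^-1)%g (inord m.-1) = (s^-1)%g (inord m.+1) by apply/val_inj; rewrite /= a b.
move/perm_inj/(congr1 val); rewrite /= !inordK; lia.
Qed.

Definition cev N : arc_colouring N.+1 2 := [ffun p : 'I_N.+1 * 'I_N.+1 => inord (p.1 %% 2)].

Lemma evenpath N : N %% 2 == 1 -> chiD12_is (@path_rel N.+1) 2.
Proof.
move=> HN; split; last first.
  move=> m; apply: (@lb2 _ _ m (inord 0) (inord 1)); rewrite /path_rel !inordK; lia.
exists (cev N); split.
  move=> u v w; rewrite /path_rel => H1 H2; rewrite !ffunE /= -val_eqE /= !inordK; lia.
move=> s Ha Hc; apply: path_rigid0 => //; first lia.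
have := Hc (inord 0) (inord 1) (path_adj _). rewrite !ffunE /=.
move=> H; have := congr1 val (H ltac:(lia)); rewrite /= !inordK; try lia.
move=> H'; case: (path_ends Ha) => E; apply/val_inj; rewrite /= inordK. all: lia.
Qed.

Lemma path_adj' N m : m.+1 < N.+1 -> @path_rel N.+1 (inord m.+1) (inord m).
Proof. move=> H; rewrite /path_rel !inordK; lia. Qed.

Lemma oddpath_no2 N : 0 < N -> N %% 2 == 0 -> ~ has_DPC (@path_rel N.+1) 2.
Proof.
move=> HN0 HN [c [Hp Hd]].
pose s := perm (@rev_ord_inj N.+1).
have sE : forall i, i < N.+1 -> s (inord i) = inord (N - i).
  move=> i Hi; rewrite permE; apply/val_inj; rewrite /= !inordK; lia.
pose a := c (inord 0, inord 1); pose b := c (inord 1, inord 0).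
have Hab : a != b by apply: Hp; [apply: path_adj | apply: path_adj']; lia.
have claim : forall i, i.+1 < N.+1 ->
  c (inord i, inord i.+1) = (if i %% 2 == 1 then b else a) /\
  c (inord i.+1, inord i) = (if i %% 2 == 1 then a else b).
  elim=> [|i IH] Hi; first by split.
  have [IH1 IH2] := IH (ltnW Hi).
  have -> : (i.+1 %% 2 == 1) = ~~ (i %% 2 == 1) by lia.
  rewrite !if_neg.
  apply: (step2 _ IH1).
  - by case: (i %% 2 == 1); rewrite // eq_sym.
  - by apply: Hp; apply: path_adj; lia.
  - by apply: Hp; [apply: path_adj | apply: path_adj']; lia.
have Ha : digraph_aut (@path_rel N.+1) s.
  move=> u v; rewrite !permE /path_rel /=; have := ltn_ord u; have := ltn_ord v; lia.
have Hpres : forall u v, path_rel u v -> c (s u, s v) = c (u, v).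
  move=> u v; rewrite /path_rel => /orP [] /eqP H.
  - rewrite -[u]inord_val -[v]inord_val -H.
    have Hu : u.+1 < N.+1 by rewrite H.
    rewrite !sE; try lia.
    have -> : N - u = (N - u.+1).+1 by lia.
    rewrite (proj2 (claim _ _)); last lia.
    rewrite (proj1 (claim _ _)); last lia.
    have -> : ((N - u.+1) %% 2 == 1) = ~~ (u %% 2 == 1) by lia.
    by rewrite if_neg.
  - rewrite -[u]inord_val -[v]inord_val -H.
    have Hv : v.+1 < N.+1 by rewrite H.
    rewrite !sE; try lia.
    have -> : N - v = (N - v.+1).+1 by lia.
    rewrite (proj1 (claim _ _)); last lia.
    rewrite (proj2 (claim _ _)); last lia.
    have -> : ((N - v.+1) %% 2 == 1) = ~~ (v %% 2 == 1) by lia.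
    by rewrite if_neg.
have Hs1 := Hd s Ha Hpres.
have := sE 0 isT; rewrite Hs1 perm1 => /(congr1 val); rewrite /= !inordK; lia.
Qed.

Definition Fo (u v : nat) : nat := if (u == 0) && (v == 1) then 2 else u %% 2.
Definition codd N : arc_colouring N.+1 3 :=
  [ffun p : 'I_N.+1 * 'I_N.+1 => inord (Fo p.1 p.2)].

Lemma oddpath N : 0 < N -> N %% 2 == 0 -> chiD12_is (@path_rel N.+1) 3.
Proof.
move=> HN0 HN; split; last first.
  move=> m H.
  have H2 : 2 <= m by apply: (@lb2 _ _ _ (inord 0) (inord 1) _ _ H); [apply: path_adj | apply: path_adj']; lia.
  have : m != 2 by apply/eqP => E; subst m; exact: (oddpath_no2 HN0 HN H).
  lia.
exists (codd N); split.
  move=> u v w; rewrite /path_rel => H1 H2; rewrite !ffunE /Fo /=.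
  repeat case: ifP => ?; rewrite -val_eqE /= !inordK; lia.
move=> s Ha Hc; apply: path_rigid0 => //.
have H01 : @path_rel N.+1 (inord 0) (inord 1) by apply: path_adj; lia.
have := Hc _ _ H01.
rewrite !ffunE /Fo /= !inordK //.
case: ifP => [/andP [/eqP H0 _] _ | _ ].
  by apply/val_inj; rewrite /= inordK.
move/(congr1 val); rewrite /= !inordK; try lia.
Qed.

Lemma modS_eq n i j : i < n ->
  (j == i.+1 %% n) = ((j == i.+1) && (i.+1 < n)) || ((i.+1 == n) && (j == 0)).
Proof.
move=> Hi; case: (ltngtP i.+1 n) => H.
- rewrite modn_small //; lia.
- lia.
- rewrite H modnn; lia.
Qed.

Lemma cycE n (i j : 'I_n) : cycle_rel i j =
  [|| ((j : nat) == i.+1) && (i.+1 < n), (i.+1 == n) && ((j : nat) == 0),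
      ((i : nat) == j.+1) && (j.+1 < n) | (j.+1 == n) && ((i : nat) == 0)].
Proof.
rewrite /cycle_rel (modS_eq _ (ltn_ord i)) (modS_eq _ (ltn_ord j)).
by rewrite !orbA.
Qed.

Lemma cyc_adj N m : m.+1 < N.+1 -> @cycle_rel N.+1 (inord m) (inord m.+1).
Proof. move=> H; rewrite cycE !inordK; lia. Qed.

Lemma cyc_nb N m : m.+2 < N.+1 -> forall j : 'I_N.+1,
  cycle_rel (inord m.+1) j -> j = inord m \/ j = inord m.+2.
Proof.
move=> Hm j; rewrite cycE inordK; last lia.
move=> H; have := ltn_ord j.
have : nat_of_ord j = m \/ nat_of_ord j = m.+2 by lia.
by case=> Hj _; [left|right]; apply/val_inj; rewrite /= inordK; lia.
Qed.

Lemma cyc_rigid N (s : {perm 'I_N.+1}) :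
  digraph_aut (@cycle_rel N.+1) s -> s (inord 0) = inord 0 -> s (inord 1) = inord 1 -> s = 1%g.
Proof.
move=> Ha H0 H1; apply: (rigid Ha) => //.
- exact: cyc_nb.
- exact: cyc_adj.
Qed.

Definition Rf N (i : nat) := if i.+2 < N.+1 then i.+2 else i.+2 - N.+1.
Definition R1 N (i : nat) := if i.+1 < N.+1 then i.+1 else 0.

Lemma Rf_lt N i : 1 <= N -> i < N.+1 -> Rf N i < N.+1.
Proof. by rewrite /Rf; case: ifP => ? ? ?; lia. Qed.
Lemma R1_lt N i : R1 N i < N.+1.
Proof. by rewrite /R1; case: ifP => ?; lia. Qed.

Lemma Rf_inj N : 1 <= N -> injective (fun i : 'I_N.+1 => (inord (Rf N i) : 'I_N.+1)).
Proof.
move=> HN i j /(congr1 val); rewrite /= !inordK ?Rf_lt //.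
move: (ltn_ord i) (ltn_ord j) => Hi Hj.
rewrite /Rf => H; apply/val_inj => /=; move: H.
by case: ifP => ?; case: ifP => ?; lia.
Qed.

Lemma cycle_no2 N : 2 <= N -> ~ has_DPC (@cycle_rel N.+1) 2.
Proof.
move=> HN [c [Hp Hd]].
have HN1 : 1 <= N by lia.
pose s := perm (Rf_inj HN1).
have sE : forall u : 'I_N.+1, nat_of_ord (s u) = Rf N u.
  by move=> u; rewrite permE /= inordK // Rf_lt.
pose nx (u : 'I_N.+1) : 'I_N.+1 := inord (R1 N u).
have nxE : forall u, nat_of_ord (nx u) = R1 N u.
  by move=> u; rewrite /nx inordK // R1_lt.
have Ha : digraph_aut (@cycle_rel N.+1) s.
  move=> u v; rewrite !cycE !sE; move: (ltn_ord u) (ltn_ord v) => Hu Hv.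
  by rewrite /Rf; case: ifP => ?; case: ifP => ?; lia.
have Hpres : forall u v, cycle_rel u v -> c (s u, s v) = c (u, v).
  move=> u v Huv; move: (ltn_ord u) (ltn_ord v) => Hu Hv.
  have A1 : cycle_rel u (nx u).
    by rewrite cycE nxE /R1; case: ifP => ?; lia.
  have A2 : cycle_rel (nx u) u.
    by rewrite cycE nxE /R1; case: ifP => ?; lia.
  have A3 : cycle_rel (nx u) (s u).
    by rewrite cycE nxE sE /R1 /Rf; case: ifP => ?; case: ifP => ?; lia.
  have A4 : cycle_rel (s u) (nx u).
    by rewrite cycE nxE sE /R1 /Rf; case: ifP => ?; case: ifP => ?; lia.
  have Hsuv : cycle_rel (s u) (s v) by rewrite Ha.
  rewrite -(outeq Hp A4 A3 Hsuv) -(outeq Hp A1 A2 Huv).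
  symmetry; apply: (@col2 _ (c (nx u, s u))); apply: Hp => //.
have Hs1 := Hd s Ha Hpres.
have := sE (inord 0); rewrite Hs1 perm1 /Rf !inordK //; case: ifP => ?; lia.
Qed.

Definition Gc N (u v : nat) : nat := if u == N then 2 else u %% 2.
Definition ccyc N : arc_colouring N.+1 3 :=
  [ffun p : 'I_N.+1 * 'I_N.+1 => inord (Gc N p.1 p.2)].

Lemma cyc_has3 N : 2 <= N -> has_DPC (@cycle_rel N.+1) 3.
Proof.
move=> HN; have H01 : @cycle_rel N.+1 (inord 0) (inord 1) by apply: cyc_adj; lia.
have [Hev|Hod] := boolP (N %% 2 == 1).
- exists (codd N); split.
    move=> u v w; rewrite !cycE => H1 H2; rewrite !ffunE /Fo /=.
    move: (ltn_ord u) (ltn_ord v) (ltn_ord w) => ? ? ?.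
    repeat case: ifP => ?; rewrite -val_eqE /= !inordK; lia.
  move=> s Ha Hc.
  have := Hc _ _ H01.
  rewrite !ffunE /Fo /= !inordK; try lia.
  case: ifP => [/andP [/eqP H0 /eqP H1] _ | _ ].
    by apply: cyc_rigid => //; apply/val_inj; rewrite /= inordK //; lia.
  rewrite !eqxx /=; move/(congr1 val); rewrite /= !inordK; lia.
- exists (ccyc N); split.
    move=> u v w; rewrite !cycE => H1 H2; rewrite !ffunE /Gc /=.
    move: (ltn_ord u) (ltn_ord v) (ltn_ord w) => ? ? ?.
    repeat case: ifP => ?; rewrite -val_eqE /= !inordK; lia.
  move=> s Ha Hc.
  have HN0 : @cycle_rel N.+1 (inord N) (inord 0) by rewrite cycE !inordK; lia.
  have sN : s (inord N) = inord N.
    have := Hc _ _ HN0; rewrite !ffunE /Gc /= !inordK; try lia.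
    move: (ltn_ord (s (inord N))) => ?.
    repeat case: ifP => ?; move/(congr1 val); rewrite /= ?inordK; try lia;
      move=> ?; apply/val_inj; rewrite /= ?inordK; lia.
  have s0 : s (inord 0) = inord 0.
    have := HN0; rewrite -Ha sN cycE inordK // => HH.
    have := Hc _ _ H01; rewrite !ffunE /Gc /= !inordK; try lia.
    move: (ltn_ord (s (inord 0))) => ?.
    repeat case: ifP => ?; move/(congr1 val); rewrite /= ?inordK; try lia;
      move=> ?; apply/val_inj; rewrite /= ?inordK; lia.
  have s1 : s (inord 1) = inord 1.
    have := H01; rewrite -Ha s0 cycE inordK // => HH.
    move: (ltn_ord (s (inord 1))) => ?.
    have [E|E] : nat_of_ord (s (inord 1)) = 1 \/ nat_of_ord (s (inord 1)) = N by lia.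
      by apply/val_inj; rewrite /= inordK; lia.
    have : s (inord 1) = s (inord N) by rewrite sN; apply/val_inj; rewrite /= inordK; lia.
    move/perm_inj/(congr1 val); rewrite /= !inordK; lia.
  exact: cyc_rigid.
Qed.

Lemma cyc3 N : 2 <= N -> chiD12_is (@cycle_rel N.+1) 3.
Proof.
move=> HN; split; first exact: cyc_has3.
move=> m H.
have H2 : 2 <= m.
  apply: (@lb2 _ _ _ (inord 0) (inord 1) _ _ H); rewrite cycE !inordK; lia.
have : m != 2 by apply/eqP => E; subst m; exact: (cycle_no2 HN H).
lia.
Qed.

Theorem mainTheorem3 :
  (forall k : nat, 1 <= k ->
     chiD12_is (@path_rel k.*2) 2 /\ chiD12_is (@path_rel k.*2.+1) 3) /\
  (forall n : nat, 3 <= n -> chiD12_is (@cycle_rel n) 3).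
Proof.
split.
  case=> [|k] // _; rewrite doubleS; split.
    apply: evenpath; lia.
  apply: oddpath; lia.
case=> [|N] // HN; apply: cyc3; lia.
Qed.
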